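(* Let $G=(V,E)$ be a connected, locally finite graph with edge weights $w_{xy}\ge w_{min}>0$ for all $xy\in E$ and with $\mu\le\mu_{max}$ on $V$. Suppose $u:(0,\infty)\times V\to(0,\infty)$ is $C^1$ in time and satisfies $$\partial_t(\log u)\ge\Psi_\Upsilon(\log u)-\eta(t)\quad\text{on }(0,\infty)\times V,$$ where $\eta:(0,\infty)\to[0,\infty)$ is continuous. Then for any $0<t_1<t_2$ and $x_1,x_2\in V$, $$u(t_1,x_1)\le u(t_2,x_2)\exp\Big(\int_{t_1}^{t_2}\eta(t)\,dt+\frac{2\mu_{max}\,d(x_1,x_2)^2}{w_{min}(t_2-t_1)}\Big),$$ where $d$ is the combinatorial graph distance.
   Context: Graphs are undirected; $x\sim y$ means $xy\in E$; $w_{xy}=w_{yx}>0$; $\mu:V\to(0,\infty)$. For $H:\mathbb R\to\mathbb R$ and $v:V\to\mathbb R$, $\Psi_H(v)(x)=\frac1{\mu(x)}\sum_{y\sim x}w_{xy}H(v(y)-v(x))$, and $\Upsilon(z)=e^z-1-z$. *)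

(* Defs.v *)
From Stdlib Require Import Reals Lra List.
Open Scope R_scope.

(* A locally finite graph on an arbitrary vertex type V is given by its
   neighbour lists: y ~ x  iff  In y (nbrs x). *)

Definition Upsilon (z : R) : R := exp z - 1 - z.

Fixpoint list_sum {V : Type} (f : V -> R) (l : list V) : R :=
  match l with
  | nil => 0
  | y :: l' => f y + list_sum f l'
  end.

Definition Psi {V : Type} (nbrs : V -> list V) (w : V -> V -> R) (mu : V -> R)
  (H : R -> R) (v : V -> R) (x : V) : R :=
  / mu x * list_sum (fun y => w x y * H (v y - v x)) (nbrs x).

Inductive walk {V : Type} (nbrs : V -> list V) : V -> V -> nat -> Prop :=
  | walk_nil : forall x, walk nbrs x x 0
  | walk_cons : forall x y z n, In y (nbrs x) -> walk nbrs y z n ->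
      walk nbrs x z (S n).

Definition is_graph_dist {V : Type} (nbrs : V -> list V) (x y : V) (n : nat) : Prop :=
  walk nbrs x y n /\ forall m, walk nbrs x y m -> (n <= m)%nat.

Definition graph_connected {V : Type} (nbrs : V -> list V) : Prop :=
  forall x y : V, exists n, walk nbrs x y n.

(* Main.v *)
Require Import Defs.
From Stdlib Require Import Reals List Lra Lia.
From Coquelicot Require Import Coquelicot.
Open Scope R_scope.

Lemma incr_lemma (f f' : R -> R) (a b k : R) : a <= b ->
  (forall c, a <= c <= b -> derivable_pt_lim f c (f' c)) ->
  (forall c, a <= c <= b -> k <= f' c) -> k * (b - a) <= f b - f a.
Proof.
  intros Hab Hd Hk. destruct Hab as [Hab|Hab].
  - destruct (MVT_cor2 f f' a b Hab Hd) as [c [Hc1 Hc2]].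
    rewrite Hc1. apply Rmult_le_compat_r; [lra|]. apply Hk; lra.
  - subst. lra.
Qed.

Lemma list_sum_nonneg {V : Type} (f : V -> R) (l : list V) :
  (forall z, In z l -> 0 <= f z) -> 0 <= Defs.list_sum f l.
Proof.
  induction l as [|y l IH]; simpl; intros H; [lra|].
  assert (0 <= f y) by (apply H; auto).
  assert (0 <= Defs.list_sum f l) by (apply IH; intros; apply H; auto). lra.
Qed.

Lemma list_sum_ge_elem {V : Type} (f : V -> R) (l : list V) (y : V) :
  (forall z, In z l -> 0 <= f z) -> In y l -> f y <= Defs.list_sum f l.
Proof.
  induction l as [|z l IH]; simpl; intros H Hy; [contradiction|].
  destruct Hy as [Hy|Hy].
  - subst. assert (0 <= Defs.list_sum f l) by (apply list_sum_nonneg; intros; apply H; auto). lra.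
  - assert (f y <= Defs.list_sum f l) by (apply IH; auto). assert (0 <= f z) by (apply H; auto). lra.
Qed.

Lemma Upsilon_nonneg z : 0 <= Upsilon z.
Proof. unfold Upsilon. pose proof (exp_ineq1_le z). lra. Qed.

Lemma Upsilon_sq z : 0 <= z -> z ^ 2 / 2 <= Upsilon z.
Proof.
  intros Hz.
  assert (H := incr_lemma (fun s => exp s - 1 - s - s ^ 2 / 2) (fun s => exp s - 1 - s) 0 z 0 Hz).
  assert (HH : 0 * (z - 0) <= (exp z - 1 - z - z ^ 2 / 2) - (exp 0 - 1 - 0 - 0 ^ 2 / 2)).
  { apply H.
    - intros c _.
      replace (exp c - 1 - c) with (exp c - 0 - 1 - INR 2 * c ^ Nat.pred 2 / 2) by (simpl; field).
      apply (derivable_pt_lim_minus (fun s => exp s - 1 - s) (fun s => s ^ 2 / 2)).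
      + apply (derivable_pt_lim_minus (fun s => exp s - 1) (fun s => s)).
        * apply (derivable_pt_lim_minus exp (fun _ => 1)). apply derivable_pt_lim_exp.
          apply derivable_pt_lim_const.
        * apply derivable_pt_lim_id.
      + unfold Rdiv. apply (derivable_pt_lim_scal_right (fun s => s ^ 2)).
        apply derivable_pt_lim_pow.
    - intros c [Hc _]. pose proof (exp_ineq1_le c). lra. }
  rewrite exp_0 in HH. unfold Upsilon. lra.
Qed.

Theorem theorem6p1
  (V : Type) (nbrs : V -> list V)
  (Hnodup : forall x, NoDup (nbrs x))
  (Hsym : forall x y, In y (nbrs x) -> In x (nbrs y))
  (Hconn : graph_connected nbrs)
  (w : V -> V -> R) (wmin : R) (mu : V -> R) (mumax : R)
  (Hwmin : 0 < wmin)
  (Hwsym : forall x y, In y (nbrs x) -> w x y = w y x)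
  (Hw : forall x y, In y (nbrs x) -> wmin <= w x y)
  (Hmu : forall x, 0 < mu x)
  (Hmumax : forall x, mu x <= mumax)
  (u u' : R -> V -> R) (eta : R -> R)
  (Hupos : forall t x, 0 < t -> 0 < u t x)
  (Hderiv : forall t x, 0 < t -> derivable_pt_lim (fun s => u s x) t (u' t x))
  (Hderiv_cont : forall t x, 0 < t -> continuity_pt (fun s => u' s x) t)
  (Heta_cont : forall t, 0 < t -> continuity_pt eta t)
  (Heta_nonneg : forall t, 0 < t -> 0 <= eta t)
  (Hineq : forall t x, 0 < t ->
     u' t x / u t x >= Psi nbrs w mu Upsilon (fun y => ln (u t y)) x - eta t) :
  forall (t1 t2 : R) (x1 x2 : V) (d : nat),
    0 < t1 -> t1 < t2 ->
    is_graph_dist nbrs x1 x2 d ->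
    forall pr : Riemann_integrable eta t1 t2,
    u t1 x1 <= u t2 x2 *
      exp (RiemannInt pr + 2 * mumax * (INR d) ^ 2 / (wmin * (t2 - t1))).
Proof.
  intros t1 t2 x1 x2 d Ht1 Ht12 [Hwalk _] pr.
  set (F := fun s => RInt eta t1 s).
  assert (HF : forall s, 0 < s -> derivable_pt_lim F s (eta s)).
  { intros s Hs. apply is_derive_Reals.
    apply (is_derive_RInt eta F t1 s).
    - exists (mkposreal (s/2) ltac:(lra)). intros b Hb.
      assert (Hb' : Rabs (b - s) < s / 2) by exact Hb.
      unfold F; apply (RInt_correct (V:=R_CompleteNormedModule)). apply ex_RInt_continuous. intros z Hz.
      apply continuity_pt_filterlim. apply Heta_cont.
      apply Rabs_def2 in Hb'. destruct Hz as [Hz1 Hz2].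
      assert (0 < Rmin t1 b) by (apply Rmin_glb_lt; lra). lra.
    - apply continuity_pt_filterlim. apply Heta_cont; lra. }
  set (h := fun s x => ln (u s x) + F s).
  assert (Hh : forall s x, 0 < s ->
     derivable_pt_lim (fun s => h s x) s (u' s x / u s x + eta s)).
  { intros s x Hs. unfold h.
    apply (derivable_pt_lim_plus (fun s => ln (u s x)) F).
    - replace (u' s x / u s x) with (/ u s x * u' s x) by (unfold Rdiv; ring).
      apply (derivable_pt_lim_comp (fun s => u s x) ln).
      + apply Hderiv; auto.
      + apply derivable_pt_lim_ln. apply Hupos; auto.
    - apply HF; auto. }
  assert (Hmumax0 : 0 < mumax) by (pose proof (Hmu x1); pose proof (Hmumax x1); lra).
  assert (Hpsi0 : forall t x, 0 < t -> 0 <= Psi nbrs w mu Upsilon (fun y => ln (u t y)) x).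
  { intros t x Ht. unfold Psi. apply Rmult_le_pos.
    - left; apply Rinv_0_lt_compat; auto.
    - apply list_sum_nonneg. intros z Hz. apply Rmult_le_pos.
      + pose proof (Hw x z Hz); lra.
      + apply Upsilon_nonneg. }
  assert (Hpsi1 : forall t x y, 0 < t -> In y (nbrs x) ->
     wmin / mumax * Upsilon (ln (u t y) - ln (u t x))
       <= Psi nbrs w mu Upsilon (fun y => ln (u t y)) x).
  { intros t x y Ht Hy. unfold Psi.
    pose proof (list_sum_ge_elem (fun y0 => w x y0 * Upsilon (ln (u t y0) - ln (u t x)))
       (nbrs x) y) as Hl.
    assert (Hle : w x y * Upsilon (ln (u t y) - ln (u t x)) <=
      Defs.list_sum (fun y0 => w x y0 * Upsilon (ln (u t y0) - ln (u t x))) (nbrs x)).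
    { apply Hl; auto. intros z Hz. apply Rmult_le_pos.
      + pose proof (Hw x z Hz); lra.
      + apply Upsilon_nonneg. }
    pose proof (Upsilon_nonneg (ln (u t y) - ln (u t x))) as HU.
    pose proof (Hw x y Hy). pose proof (Hmu x). pose proof (Hmumax x).
    assert (/ mumax <= / mu x) by (apply Rinv_le_contravar; auto).
    apply Rle_trans with (/ mu x * (w x y * Upsilon (ln (u t y) - ln (u t x)))).
    - replace (wmin / mumax * Upsilon (ln (u t y) - ln (u t x))) with
        ((/ mumax * wmin) * Upsilon (ln (u t y) - ln (u t x))) by (unfold Rdiv; ring).
      rewrite <- Rmult_assoc.
      apply Rmult_le_compat_r; auto.
      apply Rmult_le_compat; try lra. left; apply Rinv_0_lt_compat; auto.
    - apply Rmult_le_compat_l; auto. left; apply Rinv_0_lt_compat; auto. }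
  assert (Hdh : forall s x, 0 < s -> Psi nbrs w mu Upsilon (fun y => ln (u s y)) x
     <= u' s x / u s x + eta s).
  { intros s x Hs. pose proof (Hineq s x Hs). lra. }
  assert (Hmono : forall a b x, 0 < a -> a <= b -> h a x <= h b x).
  { intros a b x Ha Hab.
    pose proof (incr_lemma (fun s => h s x) (fun s => u' s x / u s x + eta s) a b 0 Hab) as H.
    cut (0 * (b - a) <= h b x - h a x). { lra. }
    apply H.
    - intros c Hc. apply Hh; lra.
    - intros c Hc. pose proof (Hdh c x ltac:(lra)). pose proof (Hpsi0 c x ltac:(lra)). lra. }
  assert (Hstep : forall a b x y, 0 < a -> a < b -> In y (nbrs x) ->
     h a x - 2 * mumax / (wmin * (b - a)) <= h b y).
  { intros a b x y Ha Hab Hy.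
    set (A := h a x).
    assert (HK : 0 < 2 * mumax / (wmin * (b - a))).
    { unfold Rdiv. apply Rmult_lt_0_compat; [lra|]. apply Rinv_0_lt_compat.
      apply Rmult_lt_0_compat; lra. }
    destruct (Rle_or_lt A (h b y)) as [Hc|Hc]; [lra|].
    assert (Hg : forall s, a <= s <= b -> 0 < A - h s y).
    { intros s Hs. pose proof (Hmono s b y ltac:(lra) ltac:(lra)). lra. }
    set (c := wmin / mumax).
    assert (Hc0 : 0 < c) by (unfold c, Rdiv; apply Rmult_lt_0_compat; auto; apply Rinv_0_lt_compat; auto).
    pose proof (incr_lemma (fun s => / (A - h s y))
       (fun s => - (- (u' s y / u s y + eta s)) / (A - h s y) ^ 2) a b (c / 2)
       ltac:(lra)) as Hinc.
    assert (Hi : c / 2 * (b - a) <= / (A - h b y) - / (A - h a y)).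
    { apply Hinc.
      - intros s Hs. apply is_derive_Reals.
        apply (is_derive_inv (fun s => A - h s y)).
        + apply is_derive_Reals.
          replace (- (u' s y / u s y + eta s)) with (0 - (u' s y / u s y + eta s)) by ring.
          apply (derivable_pt_lim_minus (fun _ => A) (fun s => h s y) s 0) .
          * apply derivable_pt_lim_const.
          * apply Hh; lra.
        + pose proof (Hg s Hs); lra.
      - intros s Hs. pose proof (Hg s Hs) as Hgs.
        pose proof (Hdh s y ltac:(lra)) as H1.
        pose proof (Hpsi1 s y x ltac:(lra) (Hsym x y Hy)) as H2.
        assert (Hxs : A <= h s x) by (apply Hmono; lra).
        assert (Heq : ln (u s x) - ln (u s y) = h s x - h s y) by (unfold h; ring).
        rewrite Heq in H2.
        pose proof (Upsilon_sq (h s x - h s y) ltac:(lra)) as H3.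
        assert (H4 : (A - h s y) ^ 2 <= (h s x - h s y) ^ 2).
        { apply pow_incr; lra. }
        fold c in H2.
        assert (H5 : c * ((A - h s y) ^ 2 / 2) <= u' s y / u s y + eta s).
        { apply Rle_trans with (c * Upsilon (h s x - h s y)); [|lra].
          apply Rmult_le_compat_l; lra. }
        assert (Hp : 0 < (A - h s y) ^ 2) by (apply pow_lt; lra).
        rewrite Ropp_involutive.
        apply Rmult_le_reg_r with ((A - h s y) ^ 2); auto.
        unfold Rdiv at 2. rewrite Rmult_assoc, Rinv_l by lra. lra. }
    assert (Hpa : 0 < / (A - h a y)) by (apply Rinv_0_lt_compat; apply Hg; lra).
    assert (Hgb := Hg b ltac:(lra)).
    assert (Hlt : c / 2 * (b - a) < / (A - h b y)) by lra.
    assert (Hcb : 0 < c / 2 * (b - a)) by (apply Rmult_lt_0_compat; lra).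
    assert (A - h b y < / (c / 2 * (b - a))).
    { rewrite <- (Rinv_inv (A - h b y)). apply Rinv_lt_contravar; [|exact Hlt].
      apply Rmult_lt_0_compat; auto. apply Rinv_0_lt_compat; auto. }
    replace (2 * mumax / (wmin * (b - a))) with (/ (c / 2 * (b - a))).
    - lra.
    - unfold c. field. lra. }
  assert (Hwk : forall x z n, walk nbrs x z n -> forall a tau, 0 < a -> 0 < tau ->
     h a x - INR n * (2 * mumax / (wmin * tau)) <= h (a + INR n * tau) z).
  { intros x z n Hw0. induction Hw0 as [x|x y z n Hy Hw0 IH]; intros a tau Ha Htau.
    - simpl. replace (a + 0 * tau) with a by ring. lra.
    - pose proof (Hstep a (a + tau) x y Ha ltac:(lra) Hy) as H1.
      replace (a + tau - a) with tau in H1 by ring.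
      pose proof (IH (a + tau) tau ltac:(lra) Htau) as H2.
      rewrite S_INR.
      replace (a + (INR n + 1) * tau) with (a + tau + INR n * tau) by ring.
      lra. }
  set (K := 2 * mumax * INR d ^ 2 / (wmin * (t2 - t1))).
  assert (Hmain : h t1 x1 - K <= h t2 x2).
  { destruct d as [|d'].
    - inversion Hwalk; subst. unfold K. simpl.
      pose proof (Hmono t1 t2 x2 Ht1 ltac:(lra)).
      replace (2 * mumax * (0 * 1) / (wmin * (t2 - t1))) with 0 by (field; lra). lra.
    - assert (HdP : 0 < INR (S d')) by (apply lt_0_INR; lia).
      pose proof (Hwk x1 x2 (S d') Hwalk t1 ((t2 - t1) / INR (S d')) Ht1
        ltac:(apply Rdiv_lt_0_compat; lra)) as H.
      replace (t1 + INR (S d') * ((t2 - t1) / INR (S d'))) with t2 in H by (field; lra).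
      replace (INR (S d') * (2 * mumax / (wmin * ((t2 - t1) / INR (S d'))))) with K in H.
      + exact H.
      + unfold K. field. repeat split; lra. }
  unfold h in Hmain.
  assert (HF1 : F t1 = 0) by (unfold F; rewrite RInt_point; reflexivity).
  assert (HF2 : F t2 = RiemannInt pr) by (unfold F; apply RInt_Reals).
  rewrite HF1, HF2 in Hmain.
  pose proof (Hupos t1 x1 Ht1) as Hu1. pose proof (Hupos t2 x2 ltac:(lra)) as Hu2.
  rewrite <- (exp_ln (u t1 x1)) by auto.
  rewrite <- (exp_ln (u t2 x2)) at 1 by auto.
  fold K. rewrite <- exp_plus.
  destruct (Rle_lt_or_eq_dec (ln (u t1 x1)) (ln (u t2 x2) + (RiemannInt pr + K))) as [Hl|Hl]; [lra| |].
  - left. apply exp_increasing. exact Hl.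
  - rewrite Hl. right. reflexivity.
Qed.
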